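(* Let $A$ be a DFA over a finite alphabet $\Sigma$ and let $S=s_1,\ldots,s_l$ be any non-empty sequence of strings $s_i\in\Sigma^*$. Any execution of prefix-free IDS on $S$ (with teacher $A$) terminates, with the program variable $k$ having value $l$.
   Context: Let $A=\langle\Sigma,Q,F,q_0,\delta\rangle$ be a DFA with language $L(A)$; $\lambda$ is the empty string; membership queries to $A$ are answered correctly. Let $d_0$ be a fresh symbol not in $\Sigma^*$; $f(d_0,b)=d_0$, $f(\alpha,b)=\alpha b$ for $\alpha\in\Sigma^*$; $U\oplus V=(U-V)\cup(V-U)$. Refinement procedure (w.r.t. $P'_k$, $T_k$): while there exist $\alpha,\beta\in P'_k$, $b\in\Sigma$ with $E_i(\alpha)=E_i(\beta)$ but $E_i(f(\alpha,b))\neq E_i(f(\beta,b))$: choose (nondeterministically) such $\alpha,\beta,b$ and $\gamma\in E_i(f(\alpha,b))\oplus E_i(f(\beta,b))$, set $v_{i+1}=b\gamma$, increase $i$, and for each $\alpha'\in T_k$ set $E_i(\alpha')=E_{i-1}(\alpha')\cup\{v_i\}$ if $\alpha'v_i\in L(A)$, else $E_i(\alpha')=E_{i-1}(\alpha')$; always $E_i(d_0)=\emptyset$. Construction procedure: states $E_i(\alpha)$, $\alpha\in T_k$; initial state $E_i(\lambda)$; accepting states those containing $\lambda$; for $\alpha\in P'_k$: if $E_i(\alpha)=\emptyset$ add self-loops for all $b$, else $\delta(E_i(\alpha),b)=E_i(f(\alpha,b))$; for $\beta\in T_k-P'_k$ with $E_i(\beta)\neq E_i(\alpha)$ for all $\alpha\in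 P'_k$ and $E_i(\beta)\ne\emptyset$, $\delta(E_i(\beta),b)=\emptyset$ for all $b$. Prefix-free IDS on $S$: initialize $i=k=t=0$, $v_0=\lambda$, $P_0=\{\lambda\}$, $P'_0=P_0\cup\{d_0\}$, $T_0=\{\lambda\}\cup\Sigma$, $E_0(\alpha)=\{\lambda\}$ if $\alpha\in L(A)$ else $\emptyset$ ($\alpha\in T_0$); refine; construct $M_0$. While $S$ is non-empty: read the next string $\alpha$ (removing it from $S$); increase $k,t$ by one; $P_k=P_{k-1}\cup\{\alpha\}$, $P'_k=P_k\cup\{d_0\}$, $T_k=T_{k-1}\cup\{\alpha\}\cup\{\alpha b:b\in\Sigma\}$; for $\beta\in T_k-T_{k-1}$ set $E_i(\beta)=\{v_j:0\le j\le i,\beta v_j\in L(A)\}$; refine; set $M_t=M_{t-1}$ if $M_{t-1}$ accepts $\alpha$ iff $\alpha\in L(A)$, else construct $M_t$. *)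

(* Defs.v *)
(* Model of "prefix-free IDS" as a nondeterministic
   small-step transition system. *)
From mathcomp Require Import all_boot.
Set Implicit Arguments. Unset Strict Implicit. Unset Printing Implicit Defensive.

Record dfa (Sigma : finType) := DFA {
  dstate : finType;
  dinit : dstate;
  dtrans : dstate -> Sigma -> dstate;
  dfinal : {set dstate} }.
Arguments dinit {Sigma} d.
Arguments dtrans {Sigma} d _ _.
Arguments dfinal {Sigma} d.

Definition word (Sigma : finType) := seq Sigma.

(* membership in L(A) (membership queries are answered correctly) *)
Definition inL (Sigma : finType) (A : dfa Sigma) (w : word Sigma) : bool :=
  foldl (dtrans A) (dinit A) w \in dfinal A.

(* strings extended by the fresh symbol d_0, encoded as None *)
Definition dword (Sigma : finType) := option (word Sigma).

Definition fext (Sigma : finType) (x : dword Sigma) (b : Sigma) : dword Sigma :=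
  match x with None => None | Some a => Some (rcons a b) end.

(* control points of the algorithm: inside the refinement loop, at the head
   of the main "while S is non-empty" loop, or terminated *)
Inductive phase := Refine | Head | Done.

Record config (Sigma : finType) := Config {
  pc : phase;
  ci : nat;
  ck : nat;
  ct : nat;
  cv : seq (word Sigma);
  cP : seq (word Sigma);
  cT : seq (word Sigma);
  cE : dword Sigma -> seq (word Sigma);    (* E_i, sets as lists *)
  crest : seq (word Sigma) }.              (* unread part of S *)

(* membership in P'_k = P_k u {d_0} *)
Definition inP' (Sigma : finType) (c : config Sigma) (x : dword Sigma) : bool :=
  if x is Some a then a \in cP c else true.

(* the refinement loop condition, together with the choice of gamma:
   alpha, beta in P'_k, E(alpha) = E(beta), E(f(alpha,b)) <> E(f(beta,b)),
   gamma in E(f(alpha,b)) (+) E(f(beta,b)) *)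
Definition refine_choice (Sigma : finType) (c : config Sigma)
  (al be : dword Sigma) (b : Sigma) (g : word Sigma) : Prop :=
  [/\ inP' c al, inP' c be, cE c al =i cE c be,
      ~ (cE c (fext al b) =i cE c (fext be b)) &
      (g \in cE c (fext al b)) != (g \in cE c (fext be b))].

Definition E_add (Sigma : finType) (A : dfa Sigma) (c : config Sigma)
  (w : word Sigma) (x : dword Sigma) : seq (word Sigma) :=
  match x with
  | None => [::]
  | Some a => if (a \in cT c) && inL A (a ++ w) then w :: cE c x else cE c x
  end.

Definition E_new (Sigma : finType) (A : dfa Sigma) (c : config Sigma)
  (Tnew : seq (word Sigma)) (x : dword Sigma) : seq (word Sigma) :=
  match x with
  | Some be => if (be \in Tnew) && (be \notin cT c)
               then [seq v <- cv c | inL A (be ++ v)] else cE c x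
  | None => cE c x
  end.

Definition ids_init (Sigma : finType) (A : dfa Sigma) (S : seq (word Sigma))
  : config Sigma :=
  {| pc := Refine; ci := 0; ck := 0; ct := 0;
     cv := [:: [::]]; cP := [:: [::]];
     cT := [::] :: [seq [:: b] | b <- enum Sigma];
     cE := fun x => match x with
                    | None => [::]
                    | Some a => if inL A a then [:: [::]] else [::] end;
     crest := S |}.

(* The construction of M_t (and the test whether
   M_{t-1} classifies alpha correctly) does not affect control flow or the
   program variables i,k,t,v,P,T,E, so it is not modelled. *)
Inductive ids_step (Sigma : finType) (A : dfa Sigma) :
    config Sigma -> config Sigma -> Prop :=
| StepRefine c al be b g :
    pc c = Refine -> refine_choice c al be b g ->
    ids_step A c
      {| pc := Refine; ci := (ci c).+1; ck := ck c; ct := ct c;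
         cv := rcons (cv c) (b :: g); cP := cP c; cT := cT c;
         cE := E_add A c (b :: g); crest := crest c |}
| StepRefineExit c :
    pc c = Refine -> ~ (exists al be b g, refine_choice c al be b g) ->
    ids_step A c
      {| pc := Head; ci := ci c; ck := ck c; ct := ct c;
         cv := cv c; cP := cP c; cT := cT c; cE := cE c; crest := crest c |}
| StepStop c :
    pc c = Head -> crest c = [::] ->
    ids_step A c
      {| pc := Done; ci := ci c; ck := ck c; ct := ct c;
         cv := cv c; cP := cP c; cT := cT c; cE := cE c; crest := crest c |}
| StepRead c a r :
    pc c = Head -> crest c = a :: r ->
    let Tn := cT c ++ a :: [seq rcons a b | b <- enum Sigma] in
    ids_step A c
      {| pc := Refine; ci := ci c; ck := (ck c).+1; ct := (ct c).+1;
         cv := cv c; cP := rcons (cP c) a; cT := Tn;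
         cE := E_new A c Tn; crest := r |}.

Inductive reachable (Sigma : finType) (A : dfa Sigma) (c0 : config Sigma)
  : config Sigma -> Prop :=
| reach0 : reachable A c0 c0
| reachS c c' : reachable A c0 c -> ids_step A c c' -> reachable A c0 c'.

(* Main.v *)
Require Import Defs.
From mathcomp Require Import all_boot.
From mathcomp Require Import zify.
From Stdlib Require Import Classical_Prop.
Set Implicit Arguments. Unset Strict Implicit. Unset Printing Implicit Defensive.

Section Pf.
Variables (Sigma : finType) (A : dfa Sigma) (S : seq (word Sigma)).
Local Notation Q := (dstate A).

Definition stO (x : dword Sigma) : option Q := omap (foldl (dtrans A) (dinit A)) x.
Definition accO (o : option Q) (v : word Sigma) : bool :=
  if o is Some q then foldl (dtrans A) q v \in dfinal A else false.
Definition indom (c : config Sigma) (x : dword Sigma) :=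
  if x is Some a then a \in cT c else true.

Definition Inv (c : config Sigma) : Prop :=
  [/\ ck c + size (crest c) = size S,
      pc c = Done -> crest c = [::],
      forall a, a \in cP c -> a \in cT c,
      forall a b, a \in cP c -> rcons a b \in cT c &
      forall x, indom c x -> cE c x =i [seq v <- cv c | accO (stO x) v] ].

Lemma inL_acc a v : inL A (a ++ v) = accO (Some (foldl (dtrans A) (dinit A) a)) v.
Proof. by rewrite /inL foldl_cat. Qed.

Lemma filter_none (s : seq (word Sigma)) : [seq v <- s | accO None v] = [::].
Proof. by elim: s. Qed.

Lemma accO_cons x b g : accO (stO x) (b :: g) = accO (stO (fext x b)) g.
Proof. by case: x => [a|] //=; rewrite foldl_rcons. Qed.

Lemma Inv_init : Inv (ids_init A S).
Proof.
split => //=.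
- by move=> a; rewrite inE => /eqP ->; rewrite mem_head.
- move=> a b; rewrite inE => /eqP ->.
  by rewrite /= inE map_f ?mem_enum ?orbT.
- by case=> [a|] _ v //=.
Qed.

Lemma Inv_step c c' : ids_step A c c' -> Inv c -> Inv c'.
Proof.
case=> {c c'} [c al be b g _ _|c Hp _|c Hp Hr|c a r Hp Hr Tn];
  case => Hk HD HPT HPr HE; split => //=.
- case=> [a|] /= Ha v; last by rewrite filter_none.
  rewrite Ha /= filter_rcons; case: ifP => hin.
  + rewrite /inL foldl_cat in hin; rewrite hin mem_rcons !inE.
    by have := HE (Some a) Ha v; rewrite /= => ->.
  + rewrite /inL foldl_cat in hin; rewrite hin.
    by have := HE (Some a) Ha v; rewrite /= => ->.
- move: Hk; rewrite Hr /=; lia.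
- move=> a0; rewrite mem_rcons inE mem_cat => /orP [/eqP ->|/HPT ->] //.
  by rewrite inE eqxx orbT.
- move=> a0 b0; rewrite mem_rcons inE mem_cat => /orP [/eqP ->|/HPr ->] //.
  by rewrite inE map_f ?mem_enum ?orbT.
- case=> [a0|] /= Ha v; last by rewrite HE.
  case: (boolP (a0 \in cT c)) => h.
  + by rewrite andbF; have := HE (Some a0) h v; rewrite /= => ->.
  + rewrite Ha /=. by rewrite (eq_filter (inL_acc a0)).
Qed.

Definition dist (c : config Sigma) : {set option Q * option Q} :=
  [set p | has (fun v => accO p.1 v != accO p.2 v) (cv c)].
Definition M := #|{: option Q * option Q}|.
Definition ph (c : config Sigma) :=
  match pc c with Refine => M.+2 + (M - #|dist c|) | Head => 1 | Done => 0 end.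
Definition meas c := size (crest c) * (2 * M + 3) + ph c.

Lemma meas_dec c c' : ids_step A c c' -> Inv c -> meas c' < meas c.
Proof.
case=> {c c'} [c al be b g Hp [Ha Hb Heq Hneq Hg]|c Hp _|c Hp Hr|c a r Hp Hr Tn];
  case => Hk HD HPT HPr HE; rewrite /meas /ph /= ?Hp.
- have ind : forall x, inP' c x -> indom c x.
    by case=> [x|] //= /HPT.
  have indf : forall x, inP' c x -> indom c (fext x b).
    by case=> [x|] //= /HPr.
  set d' := dist _.
  have Hlt : #|dist c| < #|d'|.
    apply: proper_card; apply/properP; split.
      apply/subsetP => p; rewrite !inE /= has_rcons => ->; by rewrite orbT.
    exists (stO al, stO be).
      rewrite inE /= has_rcons; apply/orP; left.
      rewrite !accO_cons. move: Hg; rewrite !HE ?indf // !mem_filter.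
      apply: contra => /eqP ->; by rewrite eqxx.
    rewrite inE /=; apply/hasPn => v hv; rewrite negbK.
    have := Heq v; rewrite !HE ?ind // !mem_filter hv !andbT => ->.
    by rewrite eqxx.
  have Hle : #|d'| <= M by apply: max_card.
  rewrite ltn_add2l; move: Hlt Hle; move: #|d'| #|dist c| => x y; lia.
- rewrite ltn_add2l; lia.
- rewrite ltn_add2l; lia.
- rewrite Hr /= mulSn.
  set X := (M - _); have : X <= M by apply: leq_subr.
  set K := size r * _; lia.
Qed.

Lemma acc_all n : forall c, Inv c -> meas c < n -> Acc (fun c' c => ids_step A c c') c.
Proof.
elim: n => [|n IH] c Hc Hm; first by lia.
constructor => c' Hs; apply: IH; first exact: Inv_step Hs Hc.
have := meas_dec Hs Hc; lia.
Qed.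

Lemma reach_Inv c : reachable A (ids_init A S) c -> Inv c.
Proof.
elim=> [|c0 c1 _ IH Hs]; first exact: Inv_init.
exact: Inv_step Hs IH.
Qed.

End Pf.

Theorem mainTheorem4 (Sigma : finType) (A : dfa Sigma) (S : seq (word Sigma)) :
  S != [::] ->
  Acc (fun c' c => ids_step A c c') (ids_init A S) /\
  (forall c, reachable A (ids_init A S) c ->
     (exists c', ids_step A c c') \/ (pc c = Done /\ ck c = size S)).
Proof.
move=> _; split.
  apply: (@acc_all _ A S _.+1 _ (Inv_init A S)); exact: ltnSn.
move=> c /reach_Inv [Hk HD _ _ _].
case Hp: (pc c).
- left. destruct (classic (exists al be b g, refine_choice c al be b g))
    as [[al [be [b [g H]]]]|H].
  + eexists; exact: StepRefine Hp H.
  + eexists; exact: StepRefineExit Hp H.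
- left; case Hr: (crest c) => [|a r].
  + eexists; exact: StepStop Hp Hr.
  + eexists; exact: StepRead Hp Hr.
- right; split => //; move: Hk; by rewrite HD //= addn0.
Qed.
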